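(* Let $R>0$ and $\Theta=(\alpha,\rho_r,\rho_d,\rho_s,\rho_0,T)$ with $\alpha>1$, $\rho_r,\rho_d,\rho_s,\rho_0>0$, $T>1$. There exists a unique $x'(R,\Theta)\ge0$ such that $$g(x'(R,\Theta))=\Big(1+\frac{\rho_d}{\rho_r}\Big)\sqrt{\frac{R\rho_r}{\alpha}}.$$ Moreover, if $K_{max}(\Theta):=\min\big(\frac T4,\frac{\rho_r}{3\rho_0},\frac{3\rho_d}{2\rho_0}\big)>10$, then the maximizer of $\zeta_{csi}(M,K,R,\Theta)$ over real $(M,K)$ with $1\le K\le K_{max}(\Theta)$ and $M>K$ is $$K'_{csi}(R,\Theta)=\max\Big(\min\Big(\frac{R}{x'(R,\Theta)},K_{max}(\Theta)\Big),1\Big),\qquad M'_{csi}(R,\Theta)=K'_{csi}+\sqrt{K'_{csi}}\sqrt{\frac{\alpha\,(2^{R/K'_{csi}}-1)}{\rho_r}}.$$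
   Context: $g(x)=\sqrt{\frac{x}{2^x-1}}\big(2^x x\ln2-2^x+1\big)$ for $x>0$, with $g(0)=0$ (its limit). For real $M>K\ge1$, $$\frac{1}{\zeta_{csi}(M,K,R,\Theta)}=\frac1R\Big[\frac{\alpha K}{M-K}\big(2^{R/K}-1\big)+M\rho_r+K\rho_d+\rho_s\Big].$$ *)

(* Defs.v *)
From Stdlib Require Import Reals Lra.
Open Scope R_scope.

Definition pow2 (x : R) : R := Rpower 2 x.

(* g(x) = sqrt(x/(2^x-1)) (2^x x ln2 - 2^x + 1) for x > 0, g(0) = 0 (its limit).
   Only used on x >= 0; the value at x = 0 is the stated convention. *)
Definition g (x : R) : R :=
  if Req_EM_T x 0 then 0
  else sqrt (x / (pow2 x - 1)) * (pow2 x * x * ln 2 - pow2 x + 1).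

Definition inv_zeta_csi (alpha rho_r rho_d rho_s : R) (M K Rr : R) : R :=
  / Rr * (alpha * K / (M - K) * (pow2 (Rr / K) - 1) + M * rho_r + K * rho_d + rho_s).

Definition zeta_csi (alpha rho_r rho_d rho_s : R) (M K Rr : R) : R :=
  / inv_zeta_csi alpha rho_r rho_d rho_s M K Rr.

Definition K_max (rho_r rho_d rho_0 T : R) : R :=
  Rmin (T / 4) (Rmin (rho_r / (3 * rho_0)) (3 * rho_d / (2 * rho_0))).

Definition K'_csi (x' Rr Kmax : R) : R := Rmax (Rmin (Rr / x') Kmax) 1.

Definition M'_csi (alpha rho_r K' Rr : R) : R :=
  K' + sqrt K' * sqrt (alpha * (pow2 (Rr / K') - 1) / rho_r).

(* Main.v *)
Require Import Defs.
From Stdlib Require Import Reals Lra.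
From Coquelicot Require Import Coquelicot.
Open Scope R_scope.

Lemma ln2_pos : 0 < ln 2.
Proof. rewrite <- ln_1. apply ln_increasing; lra. Qed.

Definition gx (x : R) : R :=
  sqrt (x / (exp (x * ln 2) - 1)) * (exp (x * ln 2) * x * ln 2 - exp (x * ln 2) + 1).

Lemma g_gx x : x <> 0 -> g x = gx x.
Proof. intros H. unfold g, gx, pow2, Rpower. destruct (Req_EM_T x 0); [lra|]. reflexivity. Qed.

Lemma D_pos x : 0 < x -> 0 < exp (x * ln 2) - 1.
Proof. intros H. pose proof ln2_pos. pose proof (exp_ineq1 (x * ln 2)). 
  assert (0 < x * ln 2) by nra. assert (x*ln 2 <> 0) by lra. specialize (H1 H3). lra. Qed.

Lemma P_pos u : 0 < u -> 0 < exp u * u - exp u + 1.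
Proof. intros H. pose proof (exp_ineq1 (- u)). assert (-u <> 0) by lra. specialize (H0 H1).
  assert (exp u * exp (-u) = 1) by (rewrite <- exp_plus; replace (u + -u) with 0 by ring; apply exp_0).
  pose proof (exp_pos u). nra. Qed.

Lemma gx_pos x : 0 < x -> 0 < gx x.
Proof. intros H. unfold gx. pose proof ln2_pos. pose proof (D_pos x H).
  apply Rmult_lt_0_compat. apply sqrt_lt_R0. apply Rdiv_lt_0_compat; lra.
  pose proof (P_pos (x * ln 2)). replace (exp (x * ln 2) * x * ln 2) with (exp (x * ln 2) * (x * ln 2)) by ring.
  apply H2. nra. Qed.

Definition gx' (x : R) : R :=
  let E := exp (x * ln 2) in let D := E - 1 in
  (D - x * ln 2 * E) / (D * D) / (2 * sqrt (x / D)) * (E * x * ln 2 - E + 1)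
  + sqrt (x / D) * (x * ln 2 * ln 2 * E).

Lemma gx_derive x : 0 < x -> is_derive gx x (gx' x).
Proof. intros H. pose proof (D_pos x H). pose proof ln2_pos.
  assert (0 < x / (exp (x * ln 2) - 1)) by (apply Rdiv_lt_0_compat; lra).
  pose proof (sqrt_lt_R0 _ H2).
  unfold gx, gx'. auto_derive.
  - split; [lra|]. split; [|exact I]. exact H2.
  - unfold Rdiv, Rminus in *. field. split; lra.
Qed.

Lemma gx'_pos x : 0 < x -> 0 < gx' x.
Proof. intros H. pose proof (D_pos x H). pose proof ln2_pos.
  assert (Hq : 0 < x / (exp (x * ln 2) - 1)) by (apply Rdiv_lt_0_compat; lra).
  pose proof (sqrt_lt_R0 _ Hq) as Hs. pose proof (sqrt_sqrt _ (Rlt_le _ _ Hq)) as Hss.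
  unfold gx'. cbv zeta.
  set (E := exp (x * ln 2)) in *. set (s := sqrt (x / (E - 1))) in *.
  pose (u := x * ln 2).
  assert (Hu : 0 < u) by (unfold u; nra).
  assert (HE : 1 + u < E) by (apply exp_ineq1; lra).
  assert (Hp : 0 < E * u - E + 1) by (apply P_pos; exact Hu).
  assert (HN : 0 < (E - 1 - u * E) * (u * E - (E - 1)) + 2 * u * u * (E - 1) * E).
  { set (D := E - 1) in *. set (p := u * E - D).
    assert (0 < p) by (unfold p, D; lra).
    assert (p < u * D) by (unfold p, D; nra).
    assert (p < u * E) by (unfold p; lra).
    replace (D - u * E) with (- p) by (unfold p; ring).
    assert (p * p <= p * (u * D)) by nra.
    assert (p * (u * D) <= u * E * (u * D)) by nra. nra. }
  assert (Heq : (E - 1 - x * ln 2 * E) / ((E - 1) * (E - 1)) / (2 * s) * (E * x * ln 2 - E + 1) +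
     s * (x * ln 2 * ln 2 * E) =
     ((E - 1 - u * E) * (u * E - (E - 1)) + 2 * (s * s) * (E-1) * (E-1) * u * ln 2 * E) / (2 * s * (E - 1) * (E - 1))).
  { unfold u. field. split; lra. }
  rewrite Heq. apply Rdiv_lt_0_compat.
  - rewrite Hss. replace (2 * (x / (E - 1)) * (E - 1) * (E - 1) * u * ln 2 * E) with (2 * u * u * (E - 1) * E).
    + exact HN.
    + unfold u. field. lra.
  - assert (0 < E - 1) by lra. 
    apply Rmult_lt_0_compat; [|lra]. apply Rmult_lt_0_compat; lra.
Qed.

Lemma gx_incr a b : 0 < a -> a < b -> gx a < gx b.
Proof. intros Ha Hab.
  destruct (MVT_cor2 gx gx' a b Hab) as [c [Hc1 Hc2]].
  - intros c Hc. apply is_derive_Reals. apply gx_derive. lra.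
  - assert (0 < gx' c) by (apply gx'_pos; lra). nra.
Qed.

Lemma gx_cont x : 0 < x -> continuity_pt gx x.
Proof. intros H. apply derivable_continuous_pt. exists (gx' x).
  apply is_derive_Reals. apply gx_derive. exact H. Qed.

Lemma ln2_lt1 : ln 2 < 1.
Proof. rewrite <- (ln_exp 1). apply ln_increasing; [lra|].
  pose proof (exp_ineq1 1). lra. Qed.

Lemma gx_sq x : 0 < x -> gx x * gx x =
  x / (exp (x * ln 2) - 1) * (exp (x * ln 2) * x * ln 2 - exp (x * ln 2) + 1)^2.
Proof. intros H. pose proof (D_pos x H). unfold gx.
  assert (Hq : 0 < x / (exp (x * ln 2) - 1)) by (apply Rdiv_lt_0_compat; lra).
  pose proof (sqrt_sqrt _ (Rlt_le _ _ Hq)).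
  set (s := sqrt _) in *. set (p := _ - _ + 1). nra. Qed.

Lemma gx_small c : 0 < c -> exists x, 0 < x <= 1 /\ gx x < c.
Proof. intros Hc. exists (Rmin 1 (c * c / 4)).
  assert (0 < c * c / 4) by nra.
  assert (Hx : 0 < Rmin 1 (c * c / 4)) by (apply Rmin_pos; lra).
  pose proof (Rmin_l 1 (c*c/4)). pose proof (Rmin_r 1 (c*c/4)).
  set (x := Rmin 1 (c * c / 4)) in *.
  split; [lra|].
  pose proof ln2_pos. pose proof ln2_lt1.
  pose proof (gx_pos x Hx) as Hgp. pose proof (gx_sq x Hx) as Hsq. pose proof (D_pos x Hx) as HD.
  set (E := exp (x * ln 2)) in *.
  assert (Hu1 : x * ln 2 <= 1) by nra.
  assert (HE3 : E <= 3). { unfold E. pose proof exp_le_3.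
    assert (exp (x * ln 2) <= exp 1). { destruct (Req_dec (x * ln 2) 1) as [e|n]. rewrite e; lra.
      left. apply exp_increasing. lra. } lra. }
  assert (HE1 : 1 + x * ln 2 <= E) by apply exp_ineq1_le.
  assert (Hp0 : 0 < exp (x * ln 2) * (x * ln 2) - exp (x * ln 2) + 1) by (apply P_pos; nra).
  fold E in Hp0.
  assert (Hp : 0 <= E * x * ln 2 - E + 1 <= x * ln 2 * (E - 1)) by (split; nra).
  assert (gx x * gx x <= 2 * x).
  { rewrite Hsq. set (u := x * ln 2) in *. set (D := E - 1) in *.
    assert (Hb : (E * x * ln 2 - E + 1)^2 <= (u * D)^2).
    { replace (E * x * ln 2 - E + 1) with (u * E - D) by (unfold u, D; ring).
      replace (E * x * ln 2 - E + 1) with (u * E - D) in Hp by (unfold u, D; ring).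
      assert (0 <= u*D) by nra. nra. }
    assert (Hb2 : x / D * (E * x * ln 2 - E + 1) ^ 2 <= x / D * (u*D)^2).
    { apply Rmult_le_compat_l; [|exact Hb]. apply Rlt_le, Rdiv_lt_0_compat; lra. }
    replace (x / D * (u * D) ^ 2) with (x * (u * u) * D) in Hb2 by (field; lra).
    assert (u * u <= 1) by nra.
    assert (D <= 2) by (unfold D; lra).
    assert (x * (u * u) * D <= x * 1 * 2). 
    { apply Rmult_le_compat; nra. }
    lra. }
  nra.
Qed.

Lemma gx_large c : 0 < c -> exists x, 1 < x /\ c < gx x.
Proof. intros Hc. pose proof ln2_pos. exists (2 / ln 2 + c * c + 1).
  assert (0 < 2 / ln 2) by (apply Rdiv_lt_0_compat; lra).
  set (x := 2 / ln 2 + c * c + 1).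
  assert (Hx : 1 < x) by (unfold x; nra).
  split; [exact Hx|].
  assert (Hx0 : 0 < x) by lra.
  pose proof (gx_pos x Hx0) as Hgp. pose proof (gx_sq x Hx0) as Hsq. pose proof (D_pos x Hx0) as HD.
  set (E := exp (x * ln 2)) in *.
  assert (Hu : 2 <= x * ln 2).
  { unfold x. replace ((2 / ln 2 + c * c + 1) * ln 2) with (2 + (c*c+1) * ln 2) by (field; lra). nra. }
  assert (HE1 : 1 + x * ln 2 <= E) by apply exp_ineq1_le.
  assert (Hp : E <= E * x * ln 2 - E + 1) by nra.
  assert (x * E <= gx x * gx x).
  { rewrite Hsq. assert (Hb : E * E <= (E * x * ln 2 - E + 1) ^ 2) by nra.
    assert (x / (E - 1) * (E * E) <= x / (E - 1) * (E * x * ln 2 - E + 1) ^ 2).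
    { apply Rmult_le_compat_l; [|exact Hb]. apply Rlt_le, Rdiv_lt_0_compat; lra. }
    assert (x * E <= x / (E - 1) * (E * E)).
    { apply (Rmult_le_reg_r (E - 1)); [lra|].
      replace (x / (E - 1) * (E * E) * (E - 1)) with (x * E * E) by (field; lra). nra. }
    lra. }
  assert (c * c < gx x * gx x) by (unfold x in *; nra). nra.
Qed.

Lemma gx_exists c : 0 < c -> exists x, 0 < x /\ gx x = c.
Proof. intros Hc. destruct (gx_small c Hc) as [a [Ha1 Ha2]].
  destruct (gx_large c Hc) as [b [Hb1 Hb2]].
  destruct (Ranalysis5.IVT_interv (fun y => gx y - c) a b) as [z [Hz1 Hz2]].
  - intros y Hy. apply continuity_pt_minus. apply gx_cont. lra. apply continuity_pt_const. intros ? ?; reflexivity.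
  - lra.
  - simpl. lra.
  - simpl. lra.
  - exists z. split; lra.
Qed.

Set Default Proof Using "All".
Section Opt.
Variables (Rr alpha rho_r rho_d : R).
Hypotheses (hR : 0 < Rr) (ha : 1 < alpha) (hr : 0 < rho_r) (hd : 0 < rho_d).

Definition cc := (1 + rho_d / rho_r) * sqrt (Rr * rho_r / alpha).
Definition SS K := alpha / rho_r * (K * (exp (Rr / K * ln 2) - 1)).
Definition hh K := 2 * rho_r * sqrt (SS K) + K * (rho_r + rho_d).
Definition PP K := exp (Rr / K * ln 2) * (Rr / K) * ln 2 - exp (Rr / K * ln 2) + 1.
Definition hh' K := - (alpha * PP K) / sqrt (SS K) + (rho_r + rho_d).

Lemma cc_pos : 0 < cc.
Proof. unfold cc. apply Rmult_lt_0_compat.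
  assert (0 < rho_d / rho_r) by (apply Rdiv_lt_0_compat; lra). lra.
  apply sqrt_lt_R0. apply Rdiv_lt_0_compat; nra. Qed.

Lemma SS_pos K : 0 < K -> 0 < SS K.
Proof. intros H. unfold SS. assert (0 < Rr / K) by (apply Rdiv_lt_0_compat; lra).
  pose proof (D_pos _ H0). apply Rmult_lt_0_compat. apply Rdiv_lt_0_compat; lra. nra. Qed.

Lemma PP_pos K : 0 < K -> 0 < PP K.
Proof. intros H. unfold PP. assert (0 < Rr / K) by (apply Rdiv_lt_0_compat; lra).
  pose proof ln2_pos. pose proof (P_pos (Rr / K * ln 2)). 
  replace (exp (Rr / K * ln 2) * (Rr / K) * ln 2) with (exp (Rr / K * ln 2) * (Rr / K * ln 2)) by ring.
  apply H2. nra. Qed.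

Lemma hh_derive K : 0 < K -> is_derive hh K (hh' K).
Proof. intros H. pose proof (SS_pos K H). pose proof (sqrt_lt_R0 _ H0).
  unfold hh, hh', PP. unfold SS in *. auto_derive.
  - split; [lra|]. split; [exact H0|exact I].
  - unfold Rdiv, Rminus in *. field. split; lra.
Qed.

Lemma sign_core K : 0 < K ->
  let D := exp (Rr / K * ln 2) - 1 in
  let Q := PP K ^ 2 * alpha * rho_r - (rho_r + rho_d) ^ 2 * K * D in
  (gx (Rr / K) * gx (Rr / K) - cc * cc = Rr / (K * D * alpha * rho_r) * Q) /\
  ((alpha * PP K) * (alpha * PP K) - ((rho_r + rho_d) * sqrt (SS K)) * ((rho_r + rho_d) * sqrt (SS K))
    = alpha / rho_r * Q) /\ (0 < D).
Proof. intros HK D Q. assert (Hx : 0 < Rr / K) by (apply Rdiv_lt_0_compat; lra).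
  pose proof (D_pos _ Hx) as HD. fold D in HD.
  pose proof (SS_pos K HK) as HS.
  pose proof (sqrt_sqrt _ (Rlt_le _ _ HS)) as HSS.
  assert (HA : 0 <= Rr * rho_r / alpha) by (apply Rlt_le, Rdiv_lt_0_compat; nra).
  pose proof (sqrt_sqrt _ HA) as HAA.
  split; [|split; [|exact HD]].
  - rewrite (gx_sq _ Hx). unfold cc.
    replace ((1 + rho_d / rho_r) * sqrt (Rr * rho_r / alpha) * ((1 + rho_d / rho_r) * sqrt (Rr * rho_r / alpha)))
      with ((1 + rho_d / rho_r) * (1 + rho_d / rho_r) * (sqrt (Rr * rho_r / alpha) * sqrt (Rr * rho_r / alpha))) by ring.
    rewrite HAA. unfold Q, PP. fold D. field. repeat split; lra.
  - replace ((rho_r + rho_d) * sqrt (SS K) * ((rho_r + rho_d) * sqrt (SS K))) with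
      ((rho_r + rho_d) * (rho_r + rho_d) * (sqrt (SS K) * sqrt (SS K))) by ring.
    rewrite HSS. unfold Q, SS. fold D. field. lra.
Qed.

Lemma sign_neg K : 0 < K -> cc < gx (Rr / K) -> hh' K < 0.
Proof. intros HK Hg. destruct (sign_core K HK) as [E1 [E2 HD]].
  set (D := exp (Rr / K * ln 2) - 1) in *.
  set (Q := PP K ^ 2 * alpha * rho_r - (rho_r + rho_d) ^ 2 * K * D) in *.
  pose proof cc_pos. pose proof (PP_pos K HK). pose proof (SS_pos K HK) as HS.
  pose proof (sqrt_lt_R0 _ HS) as Hs.
  assert (0 < Rr / (K * D * alpha * rho_r)) by (apply Rdiv_lt_0_compat; [lra|]; repeat apply Rmult_lt_0_compat; lra).
  assert (HQ : 0 < Q).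
  { assert (0 < gx (Rr / K) * gx (Rr / K) - cc * cc) by nra. rewrite E1 in H2.
    destruct (Rle_lt_dec Q 0); [|lra]. nra. }
  assert (0 < alpha / rho_r * Q) by (apply Rmult_lt_0_compat; [apply Rdiv_lt_0_compat|]; lra).
  rewrite <- E2 in H2.
  set (s := sqrt (SS K)) in *.
  assert (alpha * PP K > (rho_r + rho_d) * s).
  { destruct (Rle_lt_dec (alpha * PP K) ((rho_r + rho_d) * s)); [|lra].
    assert (0 <= alpha * PP K) by nra. nra. }
  unfold hh'. fold s.
  replace (- (alpha * PP K) / s + (rho_r + rho_d)) with (((rho_r + rho_d) * s - alpha * PP K) / s) by (field; lra).
  apply Rdiv_neg_pos; lra.
Qed.

Lemma sign_pos K : 0 < K -> gx (Rr / K) < cc -> 0 < hh' K.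
Proof. intros HK Hg. destruct (sign_core K HK) as [E1 [E2 HD]].
  set (D := exp (Rr / K * ln 2) - 1) in *.
  set (Q := PP K ^ 2 * alpha * rho_r - (rho_r + rho_d) ^ 2 * K * D) in *.
  pose proof cc_pos. pose proof (PP_pos K HK). pose proof (SS_pos K HK) as HS.
  pose proof (sqrt_lt_R0 _ HS) as Hs.
  assert (Hx : 0 < Rr / K) by (apply Rdiv_lt_0_compat; lra). pose proof (gx_pos _ Hx).
  assert (0 < Rr / (K * D * alpha * rho_r)) by (apply Rdiv_lt_0_compat; [lra|]; repeat apply Rmult_lt_0_compat; lra).
  assert (HQ : Q < 0).
  { assert (Hlt : gx (Rr / K) * gx (Rr / K) - cc * cc < 0) by nra. rewrite E1 in Hlt.
    destruct (Rle_lt_dec 0 Q); [|lra]. nra. }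
  assert (Hn : alpha / rho_r * Q < 0).
  { assert (0 < alpha / rho_r) by (apply Rdiv_lt_0_compat; lra). nra. }
  rewrite <- E2 in Hn.
  set (s := sqrt (SS K)) in *.
  assert (alpha * PP K < (rho_r + rho_d) * s).
  { destruct (Rle_lt_dec ((rho_r + rho_d) * s) (alpha * PP K)); [|lra].
    assert (0 <= (rho_r + rho_d) * s) by nra. nra. }
  unfold hh'. fold s.
  replace (- (alpha * PP K) / s + (rho_r + rho_d)) with (((rho_r + rho_d) * s - alpha * PP K) / s) by (field; lra).
  apply Rdiv_lt_0_compat; lra.
Qed.

Lemma hh_dec x' a b : 0 < x' -> gx x' = cc -> 0 < a -> a < b -> b <= Rr / x' -> hh b < hh a.
Proof. intros Hx Hg Ha Hab Hb.
  destruct (MVT_cor2 hh hh' a b Hab) as [c [Hc1 Hc2]].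
  - intros c Hc. apply is_derive_Reals. apply hh_derive. lra.
  - assert (hh' c < 0).
    { apply sign_neg. lra. rewrite <- Hg. apply gx_incr. exact Hx.
      assert (c < Rr / x') by lra.
      apply (Rmult_lt_reg_r c); [lra|]. 
      replace (Rr / c * c) with Rr by (field; lra).
      apply (Rmult_lt_compat_l x') in H; [|lra].
      replace (x' * (Rr / x')) with Rr in H by (field; lra). lra. }
    nra.
Qed.

Lemma hh_inc x' a b : 0 < x' -> gx x' = cc -> Rr / x' <= a -> a < b -> hh a < hh b.
Proof. intros Hx Hg Ha Hab.
  assert (0 < Rr / x') by (apply Rdiv_lt_0_compat; lra).
  destruct (MVT_cor2 hh hh' a b Hab) as [c [Hc1 Hc2]].
  - intros c Hc. apply is_derive_Reals. apply hh_derive. lra.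
  - assert (0 < hh' c).
    { apply sign_pos. lra. rewrite <- Hg. apply gx_incr. apply Rdiv_lt_0_compat; lra.
      assert (Rr / x' < c) by lra.
      apply (Rmult_lt_reg_r c); [lra|]. 
      replace (Rr / c * c) with Rr by (field; lra).
      apply (Rmult_lt_compat_l x') in H0; [|lra].
      replace (x' * (Rr / x')) with Rr in H0 by (field; lra). lra. }
    nra.
Qed.

Lemma T_eq K : 0 < K -> sqrt K * sqrt (alpha * (Defs.pow2 (Rr / K) - 1) / rho_r) = sqrt (SS K).
Proof. intros HK. rewrite <- sqrt_mult_alt; [|lra]. f_equal. unfold SS, Defs.pow2, Rpower. field. lra. Qed.

Definition FF M K := alpha * K / (M - K) * (Defs.pow2 (Rr / K) - 1) + M * rho_r + K * rho_d.

Lemma FF_eq M K : 0 < K -> K < M -> FF M K - hh K = rho_r * (M - K - sqrt (SS K))^2 / (M - K).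
Proof. intros HK HM. pose proof (SS_pos K HK) as HS. pose proof (sqrt_sqrt _ (Rlt_le _ _ HS)) as HSS.
  unfold FF, hh. set (s := sqrt (SS K)) in *. 
  assert (alpha * K * (Defs.pow2 (Rr / K) - 1) = rho_r * (s * s)).
  { rewrite HSS. unfold SS, Defs.pow2, Rpower. field. lra. }
  replace (alpha * K / (M - K) * (Defs.pow2 (Rr / K) - 1)) with (alpha * K * (Defs.pow2 (Rr / K) - 1) / (M - K)) by (field; lra).
  rewrite H. field. lra.
Qed.

Lemma hh_pos K : 0 < K -> 0 < hh K.
Proof. intros HK. unfold hh. pose proof (sqrt_lt_R0 _ (SS_pos K HK)). nra. Qed.

End Opt.

Theorem theorem8 (Rr alpha rho_r rho_d rho_s rho_0 T : R)
  (hR : 0 < Rr) (ha : 1 < alpha) (hr : 0 < rho_r) (hd : 0 < rho_d)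
  (hs : 0 < rho_s) (h0 : 0 < rho_0) (hT : 1 < T) :
  exists x' : R,
    (0 <= x' /\ g x' = (1 + rho_d / rho_r) * sqrt (Rr * rho_r / alpha)) /\
    (forall y : R, 0 <= y -> g y = (1 + rho_d / rho_r) * sqrt (Rr * rho_r / alpha) -> y = x') /\
    (10 < K_max rho_r rho_d rho_0 T ->
     let Kmax := K_max rho_r rho_d rho_0 T in
     let K' := K'_csi x' Rr Kmax in
     let M' := M'_csi alpha rho_r K' Rr in
     (1 <= K' <= Kmax /\ K' < M') /\
     (forall M K : R, 1 <= K <= Kmax -> K < M ->
        zeta_csi alpha rho_r rho_d rho_s M K Rr <= zeta_csi alpha rho_r rho_d rho_s M' K' Rr) /\
     (forall M K : R, 1 <= K <= Kmax -> K < M ->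
        zeta_csi alpha rho_r rho_d rho_s M' K' Rr <= zeta_csi alpha rho_r rho_d rho_s M K Rr ->
        M = M' /\ K = K')).
Proof.
  pose proof (cc_pos Rr alpha rho_r rho_d hR ha hr hd) as Hc.
  destruct (gx_exists _ Hc) as [x' [Hx' Hgx]].
  change ((1 + rho_d / rho_r) * sqrt (Rr * rho_r / alpha)) with (cc Rr alpha rho_r rho_d).
  exists x'. split; [|split].
  - split; [lra|]. rewrite g_gx; lra.
  - intros y Hy Hgy. destruct (Req_dec y 0) as [e|n].
    + subst. unfold g in Hgy. destruct (Req_EM_T 0 0); [lra|congruence].
    + rewrite g_gx in Hgy by exact n.
      destruct (Rtotal_order y x') as [l|[e|l]]; [|exact e|].
      * pose proof (gx_incr y x' ltac:(lra) l). lra.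
      * pose proof (gx_incr x' y Hx' l). lra.
  - intros HKm Kmax K' M'.
    fold Kmax in HKm.
    set (K0 := Rr / x').
    assert (HK0 : 0 < K0) by (apply Rdiv_lt_0_compat; lra).
    assert (HK' : (K0 <= 1 /\ K' = 1) \/ (Kmax <= K0 /\ K' = Kmax) \/ (1 < K0 < Kmax /\ K' = K0)).
    { unfold K', K'_csi. fold K0. unfold Rmax, Rmin.
      repeat destruct Rle_dec; lra. }
    assert (HK'r : 1 <= K' <= Kmax) by lra.
    assert (Hmin : forall K, 1 <= K <= Kmax -> K <> K' -> hh Rr alpha rho_r rho_d K' < hh Rr alpha rho_r rho_d K).
    { intros K HK Hne.
      destruct HK' as [[a b]|[[a b]|[a b]]]; rewrite b in *.
      - apply (hh_inc Rr alpha rho_r rho_d hR ha hr hd x'); auto; lra.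
      - apply (hh_dec Rr alpha rho_r rho_d hR ha hr hd x'); auto; lra.
      - destruct (Rtotal_order K K0) as [l|[e|l]]; [|lra|].
        + apply (hh_dec Rr alpha rho_r rho_d hR ha hr hd x'); auto; unfold K0 in *; lra.
        + apply (hh_inc Rr alpha rho_r rho_d hR ha hr hd x'); auto; unfold K0 in *; lra. }
    assert (HM' : M' = K' + sqrt (SS Rr alpha rho_r K')).
    { unfold M', M'_csi. rewrite (T_eq Rr alpha rho_r rho_d hR ha hr hd); auto; lra. }
    assert (HS' : 0 < sqrt (SS Rr alpha rho_r K')) by (apply sqrt_lt_R0, (SS_pos Rr alpha rho_r rho_d hR ha hr hd); lra).
    assert (HF' : FF Rr alpha rho_r rho_d M' K' = hh Rr alpha rho_r rho_d K').
    { pose proof (FF_eq Rr alpha rho_r rho_d hR ha hr hd M' K' ltac:(lra) ltac:(lra)).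
      rewrite HM' in H at 2. replace (K' + sqrt (SS Rr alpha rho_r K') - K' - sqrt (SS Rr alpha rho_r K')) with 0 in H by ring.
      replace (rho_r * 0 ^ 2 / (M' - K')) with 0 in H by (field; lra). lra. }
    assert (Hinv : forall M K, inv_zeta_csi alpha rho_r rho_d rho_s M K Rr = / Rr * (FF Rr alpha rho_r rho_d M K + rho_s)).
    { intros. reflexivity. }
    assert (HFge : forall M K, 1 <= K <= Kmax -> K < M -> hh Rr alpha rho_r rho_d K <= FF Rr alpha rho_r rho_d M K).
    { intros M K HK HM. pose proof (FF_eq Rr alpha rho_r rho_d hR ha hr hd M K ltac:(lra) HM).
      assert (0 <= rho_r * (M - K - sqrt (SS Rr alpha rho_r K)) ^ 2 / (M - K)).
      { apply Rmult_le_pos; [|apply Rlt_le, Rinv_0_lt_compat; lra]. apply Rmult_le_pos; [lra|]. apply pow2_ge_0. }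
      lra. }
    assert (Hhp : 0 < hh Rr alpha rho_r rho_d K') by (apply (hh_pos Rr alpha rho_r rho_d hR ha hr hd); lra).
    assert (Hip : 0 < inv_zeta_csi alpha rho_r rho_d rho_s M' K' Rr).
    { rewrite Hinv. apply Rmult_lt_0_compat. apply Rinv_0_lt_compat; lra. lra. }
    assert (Hle : forall M K, 1 <= K <= Kmax -> K < M ->
       inv_zeta_csi alpha rho_r rho_d rho_s M' K' Rr <= inv_zeta_csi alpha rho_r rho_d rho_s M K Rr).
    { intros M K HK HM. rewrite !Hinv. apply Rmult_le_compat_l. apply Rlt_le, Rinv_0_lt_compat; lra.
      pose proof (HFge M K HK HM).
      destruct (Req_dec K K') as [e|n]. rewrite <- e in *. lra.
      pose proof (Hmin K HK n). lra. }
    split; [split; [exact HK'r|lra]|split].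
    + intros M K HK HM. unfold zeta_csi. apply Rinv_le_contravar; auto.
    + intros M K HK HM Hz. unfold zeta_csi in Hz.
      pose proof (Hle M K HK HM).
      assert (inv_zeta_csi alpha rho_r rho_d rho_s M K Rr <= inv_zeta_csi alpha rho_r rho_d rho_s M' K' Rr).
      { rewrite <- (Rinv_inv (inv_zeta_csi alpha rho_r rho_d rho_s M K Rr)).
        rewrite <- (Rinv_inv (inv_zeta_csi alpha rho_r rho_d rho_s M' K' Rr)).
        apply Rinv_le_contravar; auto. apply Rinv_0_lt_compat; lra. }
      rewrite !Hinv in H, H0.
      assert (HFe : FF Rr alpha rho_r rho_d M K = FF Rr alpha rho_r rho_d M' K').
      { assert (0 < / Rr) by (apply Rinv_0_lt_compat; lra). nra. }
      pose proof (HFge M K HK HM).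
      assert (HKe : K = K').
      { destruct (Req_dec K K') as [e|n]; auto. pose proof (Hmin K HK n). lra. }
      split; [|exact HKe]. subst K.
      pose proof (FF_eq Rr alpha rho_r rho_d hR ha hr hd M K' ltac:(lra) HM).
      rewrite HFe, HF' in H2. replace (hh Rr alpha rho_r rho_d K' - hh Rr alpha rho_r rho_d K') with 0 in H2 by ring.
      assert ((M - K' - sqrt (SS Rr alpha rho_r K')) ^ 2 = 0).
      { assert (0 < M - K') by lra.
        set (X := (M - K' - sqrt (SS Rr alpha rho_r K')) ^ 2) in *.
        assert (rho_r * X = 0).
        { replace (rho_r * X) with (rho_r * X / (M - K') * (M - K')) by (field; lra). rewrite <- H2. ring. }
        destruct (Rmult_integral _ _ H4); lra. }
      assert (M - K' - sqrt (SS Rr alpha rho_r K') = 0).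
      { match goal with H : ?X ^ 2 = 0 |- _ => replace (X ^ 2) with (X * X) in H by ring; destruct (Rmult_integral _ _ H); lra end. }
      lra.
Qed.
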